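(* (1) The canonical projection $\pi\colon\mathrm{Aut}(\mathbb U)\to\mathrm{Aut}(\mathbb Q_{\ge0})$, $f\mapsto D_f$, is a continuous open surjective homomorphism with kernel $\mathrm{Iso}(\mathbb U)$ that admits a continuous homomorphism $s\colon\mathrm{Aut}(\mathbb Q_{\ge0})\to\mathrm{Aut}(\mathbb U)$ with $\pi\circ s=\mathrm{id}$, and hence induces an isomorphism of topological groups $\mathrm{Aut}(\mathbb U)\cong\mathrm{Iso}(\mathbb U)\rtimes\mathrm{Aut}(\mathbb Q_{\ge0})$, $(n,h)\mapsto n\,s(h)$. (2) Likewise the canonical projection $\bar\pi\colon\mathrm{Aut}_M(\overline{\mathbb U})\to\mathrm{Aut}(\mathbb Q_{\ge0})$ induces an isomorphism of topological groups $\mathrm{Aut}_M(\overline{\mathbb U})\cong\mathrm{Iso}_M(\overline{\mathbb U})\rtimes\mathrm{Aut}(\mathbb Q_{\ge0})$. In particular, the short exact sequences $1\to\mathrm{Iso}(\mathbb U)\to\mathrm{Aut}(\mathbb U)\to\mathrm{Aut}(\mathbb Q_{\ge0})\to1$ and $1\to\mathrm{Iso}_M(\overline{\mathbb U})\to\mathrm{Aut}_M(\overline{\mathbb U})\to\mathrm{Aut}(\mathbb Q_{\ge0})\to1$ split.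
   Context: $\mathbb U$ is the countable rational Urysohn ultrametric space viewed as a two-sorted ultrametric space with distance set $\mathbb Q_{\ge0}$, and $\overline{\mathbb U}$ is its Cauchy completion. A dc-automorphism is a bijection $f$ of points with an order automorphism $D_f$ of $\mathbb Q_{\ge0}$ such that $d(f(x),f(y))=D_f(d(x,y))$; isometries are those with $D_f=\mathrm{id}$. $\mathrm{Aut}(\mathbb U)$ is the group of dc-automorphisms with the topology of pointwise convergence on both sorts (basic neighbourhoods: agreement with $f$ on finitely many points and distances), $\mathrm{Iso}(\mathbb U)$ its subgroup of isometries. $\mathrm{Aut}_M(\overline{\mathbb U})$ is the dc-automorphism group of $\overline{\mathbb U}$ with basic neighbourhoods $\{g:d(g(x),f(x))<r\ \forall x\in A\}$, $A$ finite, $r>0$, and $\mathrm{Iso}_M(\overline{\mathbb U})$ its subgroup of isometries; $\mathrm{Aut}(\mathbb Q_{\ge0})$ has pointwise convergence topology. The semidirect product $N\rtimes H$ is $N\times H$ with the product topology and multiplication $(n,h)(n',h')=(n\,s(h)n's(h)^{-1},hh')$. *)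

(* Defs.v *)
From Stdlib Require Import ClassicalEpsilon List.
From mathcomp Require Import all_boot all_order all_algebra.
Set Implicit Arguments. Unset Strict Implicit. Unset Printing Implicit Defensive.
Import Order.TTheory GRing.Theory Num.Theory.
Local Open Scope ring_scope.

Definition qnn := {q : rat | 0 <= q}.

Definition ultrametric (X : Type) (d : X -> X -> qnn) : Prop :=
  (forall x y, val (d x y) = 0 <-> x = y) /\
  (forall x y, d x y = d y x) /\
  (forall x y z, val (d x z) <= Num.max (val (d x y)) (val (d y z))).

Definition countable_type (X : Type) : Prop := exists c : X -> nat, injective c.

Definition ext_property (X : Type) (d : X -> X -> qnn) : Prop :=
  forall (A : list X) (r : X -> rat),
    (forall a, In a A -> 0 < r a) ->
    (forall a b, In a A -> In b A ->
       val (d a b) <= Num.max (r a) (r b) /\ r a <= Num.max (val (d a b)) (r b)) ->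
    exists z, forall a, In a A -> val (d z a) = r a.

(** (X,d) is (isometric to) the countable rational Urysohn ultrametric space U:
    the unique (up to isometry) countable ultrametric space with distances in
    Q_{>=0} having the one-point extension property (Fraisse limit). *)
Definition rational_urysohn_ultrametric (X : Type) (d : X -> X -> qnn) : Prop :=
  ultrametric d /\ countable_type X /\ ext_property d.

Definition cauchy (Y : Type) (dY : Y -> Y -> qnn) (u : nat -> Y) : Prop :=
  forall eps : rat, 0 < eps -> exists N, forall m n, (N <= m)%N -> (N <= n)%N ->
    val (dY (u m) (u n)) < eps.

Definition converges_to (Y : Type) (dY : Y -> Y -> qnn) (u : nat -> Y) (y : Y) : Prop :=
  forall eps : rat, 0 < eps -> exists N, forall n, (N <= n)%N -> val (dY (u n) y) < eps.

Definition is_completion (X Y : Type) (d : X -> X -> qnn) (dY : Y -> Y -> qnn)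
    (e : X -> Y) : Prop :=
  ultrametric dY /\
  (forall x x', dY (e x) (e x') = d x x') /\
  (forall y (r : rat), 0 < r -> exists x, val (dY (e x) y) < r) /\
  (forall u : nat -> Y, cauchy dY u -> exists y, converges_to dY u y).

Definition qaut (D : qnn -> qnn) : Prop :=
  bijective D /\ forall p q : qnn, (val p <= val q) = (val (D p) <= val (D q)).

(** Elements of the (two-sorted) automorphism groups are pairs (f, D_f). *)
Definition dcmap (T : Type) := ((T -> T) * (qnn -> qnn))%type.

Definition dcaut (T : Type) (d : T -> T -> qnn) (g : dcmap T) : Prop :=
  bijective g.1 /\ qaut g.2 /\ forall x y, d (g.1 x) (g.1 y) = g.2 (d x y).

Definition dciso (T : Type) (d : T -> T -> qnn) (g : dcmap T) : Prop :=
  dcaut d g /\ g.2 = id.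

Definition finv (A : Type) (f : A -> A) : A -> A :=
  fun y => epsilon (inhabits y) (fun x => f x = y).

Definition gmul (T : Type) (g h : dcmap T) : dcmap T := (g.1 \o h.1, g.2 \o h.2).
Definition ginv (T : Type) (g : dcmap T) : dcmap T := (finv g.1, finv g.2).

Definition sd_mul (T : Type) (s : (qnn -> qnn) -> dcmap T)
    (p q : (dcmap T * (qnn -> qnn))%type) : (dcmap T * (qnn -> qnn))%type :=
  (gmul (gmul (gmul p.1 (s p.2)) q.1) (ginv (s p.2)), p.2 \o q.2).

(** Topologies given by neighbourhood bases: N x i is the i-th basic
    neighbourhood of x. *)
Definition continuous_map (T1 T2 I1 I2 : Type) (G1 : T1 -> Prop)
    (N1 : T1 -> I1 -> T1 -> Prop) (N2 : T2 -> I2 -> T2 -> Prop) (phi : T1 -> T2) :=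
  forall x, G1 x -> forall j : I2, exists i : I1,
    forall y, G1 y -> N1 x i y -> N2 (phi x) j (phi y).

Definition open_map (T1 T2 I1 I2 : Type) (G1 : T1 -> Prop)
    (N1 : T1 -> I1 -> T1 -> Prop) (G2 : T2 -> Prop) (N2 : T2 -> I2 -> T2 -> Prop)
    (phi : T1 -> T2) :=
  forall x, G1 x -> forall i : I1, exists j : I2,
    forall z, G2 z -> N2 (phi x) j z -> exists y, G1 y /\ N1 x i y /\ phi y = z.

Definition nbQ (h : qnn -> qnn) (B : list qnn) (h' : qnn -> qnn) : Prop :=
  forall q, In q B -> h' q = h q.

Definition nbPW (T : Type) (g : dcmap T) (AB : (list T * list qnn)%type) (g' : dcmap T) : Prop :=
  (forall x, In x AB.1 -> g'.1 x = g.1 x) /\ (forall q, In q AB.2 -> g'.2 q = g.2 q).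

Definition nbM (T : Type) (d : T -> T -> qnn) (g : dcmap T)
    (Ar : (list T * {r : rat | 0 < r})%type) (g' : dcmap T) : Prop :=
  forall x, In x Ar.1 -> val (d (g'.1 x) (g.1 x)) < val Ar.2.

Definition nbprod (T1 T2 I1 I2 : Type) (N1 : T1 -> I1 -> T1 -> Prop)
    (N2 : T2 -> I2 -> T2 -> Prop) (p : (T1 * T2)%type) (ij : (I1 * I2)%type)
    (q : (T1 * T2)%type) : Prop :=
  N1 p.1 ij.1 q.1 /\ N2 p.2 ij.2 q.2.

Definition canonical_split (T I : Type) (Aut Iso : dcmap T -> Prop)
    (N : dcmap T -> I -> dcmap T -> Prop) : Prop :=
  let pi := fun g : dcmap T => g.2 in
  (forall g, Aut g -> qaut (pi g)) /\
  (forall g h, Aut g -> Aut h -> pi (gmul g h) = pi g \o pi h) /\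
  continuous_map Aut N nbQ pi /\
  open_map Aut N qaut nbQ pi /\
  (forall h, qaut h -> exists g, Aut g /\ pi g = h) /\
  (forall g, Aut g -> (pi g = id <-> Iso g)) /\
  exists s : (qnn -> qnn) -> dcmap T,
    (forall h, qaut h -> Aut (s h)) /\
    (forall h k, qaut h -> qaut k -> s (h \o k) = gmul (s h) (s k)) /\
    continuous_map qaut nbQ N s /\
    (forall h, qaut h -> pi (s h) = h) /\
    let SD := fun p : (dcmap T * (qnn -> qnn))%type => Iso p.1 /\ qaut p.2 in
    let Phi := fun p : (dcmap T * (qnn -> qnn))%type => gmul p.1 (s p.2) in
    (forall p, SD p -> Aut (Phi p)) /\
    (forall g, Aut g -> exists! p, SD p /\ Phi p = g) /\
    (forall p q, SD p -> SD q -> Phi (sd_mul s p q) = gmul (Phi p) (Phi q)) /\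
    continuous_map SD (nbprod N nbQ) N Phi /\
    open_map SD (nbprod N nbQ) Aut N Phi.

(* Main.v *)
Require Import Defs.
From Stdlib Require Import ClassicalEpsilon List FunctionalExtensionality PropExtensionality Classical Lia.
From mathcomp Require Import all_boot all_order all_algebra zify.
Set Implicit Arguments. Unset Strict Implicit. Unset Printing Implicit Defensive.
Import Order.TTheory GRing.Theory Num.Theory.
Local Open Scope ring_scope.

Lemma finvK A (f : A -> A) : bijective f -> forall y, f (Defs.finv f y) = y.
Proof.
case=> g fg gf y; rewrite /Defs.finv.
apply: (epsilon_spec (inhabits y) (fun x => f x = y)); by exists (g y).
Qed.

Lemma finvE A (f : A -> A) : bijective f -> forall x, Defs.finv f (f x) = x.
Proof. move=> bf x; apply: (bij_inj bf); by rewrite finvK. Qed.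

Lemma finv_bij A (f : A -> A) : bijective f -> bijective (Defs.finv f).
Proof. move=> bf; exists f => y; [exact: finvK | exact: finvE]. Qed.

Lemma finv_comp A (f g : A -> A) : bijective f -> bijective g ->
  forall y, Defs.finv (f \o g) y = Defs.finv g (Defs.finv f y).
Proof.
move=> bf bg y; apply: (bij_inj (bij_comp bf bg)); rewrite finvK; last exact: bij_comp bf bg. by rewrite /= !finvK.
Qed.

Definition q0 : qnn := exist _ 0 (lexx 0).

Lemma qge0 (p : qnn) : 0 <= val p.
Proof. exact: (valP p). Qed.

Lemma qval_inj (p q : qnn) : val p = val q -> p = q.
Proof. exact: val_inj. Qed.

Lemma qaut_lt h : qaut h -> forall p q, (val p < val q) = (val (h p) < val (h q)).
Proof. move=> [_ H] p q; by rewrite !ltNge H. Qed.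

Lemma qaut_le h : qaut h -> forall p q, (val p <= val q) = (val (h p) <= val (h q)).
Proof. by move=> [_ H]. Qed.

Lemma qaut_0 h : qaut h -> val (h q0) = 0.
Proof.
move=> [[g hg gh] H]; apply/eqP; rewrite eq_le qge0 andbT.
have := H q0 (g q0); rewrite gh qge0 => /esym ->. done.
Qed.

Lemma qaut_0' h p : qaut h -> val p = 0 -> val (h p) = 0.
Proof. move=> Hh Hp; have -> : p = q0 by apply: qval_inj. exact: qaut_0. Qed.

Lemma qaut_finv h : qaut h -> qaut (Defs.finv h).
Proof.
move=> [bh H]; split; first exact: finv_bij.
move=> p q; by rewrite [RHS]H !finvK.
Qed.

Lemma qaut_comp h k : qaut h -> qaut k -> qaut (h \o k).
Proof.
move=> [bh Hh] [bk Hk]; split; first exact: bij_comp.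
move=> p q /=; by rewrite Hk Hh.
Qed.

Lemma qaut_id : qaut id.
Proof. split=> //; exists id => //. Qed.

Lemma qaut_bij h : qaut h -> bijective h.
Proof. by case. Qed.

Lemma qaut_pos h p : qaut h -> 0 < val p -> 0 < val (h p).
Proof.
move=> Hh Hp; have := qaut_lt Hh q0 p; rewrite /= Hp qaut_0 //.
Qed.

Section Ultra.
Variables (T : Type) (d : T -> T -> qnn) (ud : ultrametric d).

Lemma ud0 x : val (d x x) = 0.
Proof. by case: ud => [H _]; apply H. Qed.

Lemma ud_eq0 x y : val (d x y) = 0 -> x = y.
Proof. by case: ud => [H _]; apply H. Qed.

Lemma ud_sym x y : d x y = d y x.
Proof. by case: ud => [_ [H _]]. Qed.

Lemma ud_tri x y z : val (d x z) <= Num.max (val (d x y)) (val (d y z)).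
Proof. by case: ud => [_ [_ H]]. Qed.

Lemma ud_le x y z r : val (d x y) <= r -> val (d y z) <= r -> val (d x z) <= r.
Proof.
move=> h1 h2; apply: le_trans (ud_tri x y z) _; by rewrite ge_max h1 h2.
Qed.

Lemma ud_lt x y z r : val (d x y) < r -> val (d y z) < r -> val (d x z) < r.
Proof.
move=> h1 h2; apply: le_lt_trans (ud_tri x y z) _; by rewrite gt_max h1 h2.
Qed.

Lemma ud_iso x y z : val (d x y) < val (d y z) -> d x z = d y z.
Proof.
move=> h; apply: qval_inj; apply/eqP; rewrite eq_le.
have -> : val (d x z) <= val (d y z).
  apply: le_trans (ud_tri x y z) _; by rewrite ge_max (ltW h) lexx.
rewrite /=; rewrite leNgt; apply/negP => h2.
have := ud_tri y x z; rewrite leNgt => /negP; apply.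
by rewrite gt_max ud_sym h h2.
Qed.

Lemma ud_pos x y : x <> y -> 0 < val (d x y).
Proof.
move=> nxy; rewrite lt_def qge0 andbT; apply/eqP => h; apply: nxy; exact: ud_eq0.
Qed.

End Ultra.

Lemma dcaut_mul T (d : T -> T -> qnn) g k : dcaut d g -> dcaut d k -> dcaut d (gmul g k).
Proof.
move=> [bg [qg Hg]] [bk [qk Hk]]; split; first exact: bij_comp.
split; first exact: qaut_comp.
move=> x y /=; by rewrite Hg Hk.
Qed.

Lemma dcaut_inv T (d : T -> T -> qnn) g : dcaut d g -> dcaut d (ginv g).
Proof.
move=> [bg [qg Hg]]; split; first exact: finv_bij.
split; first exact: qaut_finv.
move=> x y /=; apply: (bij_inj (qaut_bij qg)); by rewrite -Hg !finvK //; case: qg.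
Qed.

Lemma dciso_aut T (d : T -> T -> qnn) g : dciso d g -> dcaut d g.
Proof. by case. Qed.

Lemma mulKV T (n k : dcmap T) : bijective k.1 -> bijective k.2 -> gmul (gmul n k) (ginv k) = n.
Proof.
case: n => n1 n2 b1 b2; rewrite /gmul /ginv /=; congr pair; apply: functional_extensionality => x /=;
  by rewrite finvK.
Qed.

Lemma mulVK T (n k : dcmap T) : bijective k.1 -> bijective k.2 -> gmul (gmul n (ginv k)) k = n.
Proof.
case: n => n1 n2 b1 b2; rewrite /gmul /ginv /=; congr pair; apply: functional_extensionality => x /=;
  by rewrite finvE.
Qed.

Lemma dcaut_bij1 T (d : T -> T -> qnn) g : dcaut d g -> bijective g.1.
Proof. by case. Qed.
Lemma dcaut_bij2 T (d : T -> T -> qnn) g : dcaut d g -> bijective g.2.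
Proof. by case=> _ [[]]. Qed.
Lemma dcaut_q T (d : T -> T -> qnn) g : dcaut d g -> qaut g.2.
Proof. by case=> _ []. Qed.

Lemma nbQ_app h B B' h' : nbQ h (B ++ B') h' -> nbQ h B h' /\ nbQ h B' h'.
Proof. move=> H; split=> q Hq; apply: H; apply: in_or_app; tauto. Qed.

Section Abstract.
Variables (T I : Type) (d : T -> T -> qnn) (N : dcmap T -> I -> dcmap T -> Prop)
  (s : (qnn -> qnn) -> dcmap T).
Hypotheses
 (s_aut : forall h, qaut h -> dcaut d (s h))
 (s_hom : forall h k, qaut h -> qaut k -> s (h \o k) = gmul (s h) (s k))
 (s_cont : continuous_map qaut nbQ N s)
 (s_pi : forall h, qaut h -> (s h).2 = h)
 (N_mul : forall g k, dcaut d g -> dcaut d k -> forall j, exists i1 i2,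
    forall g' k', dcaut d g' -> dcaut d k' -> N g i1 g' -> N k i2 k' ->
      N (gmul g k) j (gmul g' k'))
 (N_inv : forall g, dcaut d g -> forall j, exists i, forall g', dcaut d g' ->
    N g i g' -> N (ginv g) j (ginv g'))
 (N_pi : continuous_map (dcaut d) N nbQ (fun g => g.2))
 (N_refl : forall g i, dcaut d g -> N g i g)
 (N_cap : forall g i i', exists i'', forall g', N g i'' g' -> N g i g' /\ N g i' g').

Lemma abstract_split : canonical_split (dcaut d) (dciso d) N.
Proof.
have sb1 h : qaut h -> bijective (s h).1 by move=> /s_aut /dcaut_bij1.
have sb2 h : qaut h -> bijective (s h).2 by move=> /s_aut /dcaut_bij2.
rewrite /canonical_split /=.
split; first by move=> g /dcaut_q.
split; first by [].
split; first exact: N_pi.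
split.
  move=> g Ag i.
  have qg := dcaut_q Ag.
  set k := gmul (ginv (s g.2)) g.
  have Ak : dcaut d k by apply: dcaut_mul => //; apply: dcaut_inv; apply: s_aut.
  have Eg : gmul (s g.2) k = g.
    rewrite /k; case: g Ag qg {k Ak} => g1 g2 Ag qg /=.
    rewrite /gmul /ginv /=; congr pair; apply: functional_extensionality => x /=;
      rewrite finvK //; [exact: sb1 | exact: sb2].
  have [i1 [i2 Hm]] := N_mul (s_aut qg) Ak i.
  have [B HB] := s_cont qg i1.
  exists B => z qz Hz.
  exists (gmul (s z) k); split; first by apply: dcaut_mul => //; apply: s_aut.
  split; last by rewrite /= s_pi // /k /= s_pi // => //; apply: functional_extensionality => x /=;
     rewrite finvE //; by case: qg.
  rewrite -{1}Eg; apply: Hm => //; [exact: s_aut | exact: HB | exact: N_refl].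
split; first by move=> h qh; exists (s h); split; [exact: s_aut | exact: s_pi].
split.
  move=> g Ag; split; [by move=> H; split | by case].
exists s.
split; first exact: s_aut.
split; first exact: s_hom.
split; first exact: s_cont.
split; first exact: s_pi.
split.
  move=> [n h] [[An _] qh] /=; apply: dcaut_mul => //; exact: s_aut.
split.
  move=> g Ag.
  have qg := dcaut_q Ag.
  exists (gmul g (ginv (s g.2)), g.2); split.
    split; last by rewrite /= mulVK //; [exact: sb1 | exact: sb2].
    split; last by [].
    rewrite /dciso; split.
    apply: dcaut_mul => //; apply: dcaut_inv; exact: s_aut.
    rewrite /= s_pi //; apply: functional_extensionality => x /=; rewrite finvK //; by case: qg.
  move=> [n h] [[Hn qh] E]; case: Hn => An n2; simpl in E, n2, qh.
  have Eh : h = g.2 by rewrite -E /= n2 s_pi.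
  subst h; congr pair; rewrite -{1}E mulKV //; [exact: sb1 | exact: sb2].
split.
  move=> [n h] [n' h'] [[An n2] qh] [[An' n2'] qh'] /=.
  rewrite s_hom // /gmul /ginv /=; congr pair; apply: functional_extensionality => x /=;
    rewrite finvE //; [exact: sb1 | exact: sb2].
split.
  move=> [n h] [[An n2] qh] j /=.
  have [i1 [i2 Hm]] := N_mul An (s_aut qh) j.
  have [B HB] := s_cont qh i2.
  exists (i1, B) => [[n' h']] [[An' n2'] qh'] [/= H1 H2].
  apply: Hm => //; [exact: s_aut | exact: HB].
move=> [n h] [[An n2] qh] [i1 B] /=.
set g := gmul n (s h).
have Ag : dcaut d g by apply: dcaut_mul => //; exact: s_aut.
have g2 : g.2 = h by rewrite /g /= n2 s_pi.
have [j1 [j2 Hm]] := N_mul Ag (dcaut_inv (s_aut qh)) i1.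
have [k2 Hk] := N_inv (s_aut qh) j2.
have [B2 HB2] := s_cont qh k2.
have [j3 Hj3] := N_pi Ag (B2 ++ B).
have [j Hj] := N_cap g j1 j3.
exists j => g' Ag' Hg'.
have [Hg1 Hg3] := Hj _ Hg'.
have qg' := dcaut_q Ag'.
have [HQ2 HQ] := nbQ_app (Hj3 _ Ag' Hg3).
rewrite g2 in HQ2 HQ.
exists (gmul g' (ginv (s g'.2)), g'.2); split.
  split; last by [].
  rewrite /dciso; split; first by apply: dcaut_mul => //; apply: dcaut_inv; exact: s_aut.
  rewrite /= s_pi //; apply: functional_extensionality => x /=; rewrite finvK //; by case: qg'.
split.
  split; last by [].
  have -> : n = gmul g (ginv (s h)) by rewrite /g mulKV //; [exact: sb1 | exact: sb2].
  apply: Hm => //; first by apply: dcaut_inv; exact: s_aut.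
  apply: Hk; first exact: s_aut.
  exact: HB2.
by rewrite /= mulVK //; [exact: sb1 | exact: sb2].
Qed.

End Abstract.

Section PW.
Variables (T : Type) (d : T -> T -> qnn).

Lemma PW_mul : forall g k, dcaut d g -> dcaut d k -> forall j, exists i1 i2,
    forall g' k', dcaut d g' -> dcaut d k' -> nbPW g i1 g' -> nbPW k i2 k' ->
      nbPW (gmul g k) j (gmul g' k').
Proof.
move=> g k Ag Ak [F B]; exists (List.map k.1 F, map k.2 B), (F, B).
move=> g' k' _ _ [H1 H2] [K1 K2]; split=> /= [x Hx|q Hq].
  by rewrite K1 // H1 //; apply: in_map.
by rewrite K2 // H2 //; apply: in_map.
Qed.

Lemma PW_inv : forall g, dcaut d g -> forall j, exists i, forall g', dcaut d g' ->
    nbPW g i g' -> nbPW (ginv g) j (ginv g').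
Proof.
move=> g Ag [F B]; exists (List.map (Defs.finv g.1) F, List.map (Defs.finv g.2) B).
move=> g' Ag' [H1 H2]; split=> /= [x Hx|q Hq].
  have E : g'.1 (Defs.finv g.1 x) = x.
    have Hin : In (Defs.finv g.1 x) (List.map (Defs.finv g.1) F) by apply: in_map.
    by rewrite (H1 _ Hin) finvK //; exact: (dcaut_bij1 Ag).
  by rewrite -{1}E finvE //; exact: (dcaut_bij1 Ag').
have E : g'.2 (Defs.finv g.2 q) = q.
  have Hin : In (Defs.finv g.2 q) (List.map (Defs.finv g.2) B) by apply: in_map.
  by rewrite (H2 _ Hin) finvK //; exact: (dcaut_bij2 Ag).
by rewrite -{1}E finvE //; exact: (dcaut_bij2 Ag').
Qed.

Lemma PW_pi : continuous_map (dcaut d) (@nbPW T) nbQ (fun g => g.2).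
Proof.
move=> g Ag B; exists ([::], B) => g' _ [_ H] q Hq; exact: H.
Qed.

Lemma PW_refl g (i : list T * list qnn) : dcaut d g -> nbPW g i g.
Proof. by move=> _; split. Qed.

Lemma PW_cap g (i i' : list T * list qnn) : exists i'', forall g', nbPW g i'' g' -> nbPW g i g' /\ nbPW g i' g'.
Proof.
case: i i' => [F B] [F' B']; exists (F ++ F', B ++ B') => g' [H1 H2] /=.
split; split=> /= [x Hx|q Hq]; (apply: H1 || apply: H2); apply: in_or_app; tauto.
Qed.

End PW.

Definition posr := {r : rat | 0 < r}.
Definition mkpos (r : rat) (H : 0 < r) : posr := exist _ r H.
Definition pos2q (r : posr) : qnn := exist _ (val r) (ltW (valP r)).
Definition posmin (r r' : posr) : posr.
Proof. exists (Num.min (val r) (val r')); rewrite lt_min; apply/andP; split; exact: valP. Defined.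

Lemma posmin_l r r' : val (posmin r r') <= val r.
Proof. by rewrite /= ge_min lexx. Qed.
Lemma posmin_r r r' : val (posmin r r') <= val r'.
Proof. by rewrite /= ge_min lexx orbT. Qed.

Section Metric.
Variables (Y : Type) (dY : Y -> Y -> qnn) (ud : ultrametric dY)
  (full : forall q : qnn, 0 < val q -> exists a b, dY a b = q).

Lemma pair_iso u v u' v' : val (dY u' u) < val (dY u v) -> val (dY v' v) < val (dY u v) ->
  dY u' v' = dY u v.
Proof.
move=> h1 h2.
have E1 : dY u' v = dY u v by apply: ud_iso.
have h3 : val (dY v' v) < val (dY v u') by rewrite (ud_sym ud v u') E1.
have E2 : dY v' u' = dY v u' := ud_iso ud h3.
by rewrite (ud_sym ud u' v') E2 (ud_sym ud v u') E1.
Qed.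

Lemma M_pi_list g (B : list qnn) : dcaut dY g -> exists (A : list Y) (r : posr),
  forall g', dcaut dY g' -> nbM dY g (A, r) g' -> forall q, In q B -> g'.2 q = g.2 q.
Proof.
move=> Ag; elim: B => [|q B [A [r IH]]].
  by exists [::], (mkpos (ltr01 : (0 : rat) < 1)) => g' _ _ q [].
have qg := dcaut_q Ag.
have [q0E|qpos] := eqVneq (val q) 0.
  exists A, r => g' Ag' H q' /= [<-|Hq']; last by apply: IH.
  apply: qval_inj; rewrite !qaut_0' //; exact: dcaut_q Ag'.
have qpos' : 0 < val q by rewrite lt_def qpos qge0.
have [a [b Eab]] := full qpos'.
have gq := qaut_pos qg qpos'.
exists [:: a, b & A], (posmin r (mkpos gq)) => g' Ag' H q' /= [<-|Hq']; last first.
  apply: IH => // x Hx; apply: lt_le_trans (posmin_l _ _); apply: H; by right; right.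
have [_ [_ D]] := Ag.
have [_ [_ D']] := Ag'.
rewrite -Eab -D -D'; apply: pair_iso.
  apply: lt_le_trans; first by apply: H; left.
  by rewrite D Eab posmin_r.
apply: lt_le_trans; first by apply: H; right; left.
by rewrite D Eab posmin_r.
Qed.

Lemma M_pi : continuous_map (dcaut dY) (nbM dY) nbQ (fun g => g.2).
Proof.
move=> g Ag B; have [A [r H]] := M_pi_list B Ag.
exists (A, r) => g' Ag' Hg' q Hq; exact: H.
Qed.

Lemma M_refl g (i : list Y * posr) : dcaut dY g -> nbM dY g i g.
Proof. move=> _ x _; rewrite ud0 //; exact: valP. Qed.

Lemma M_cap g (i i' : list Y * posr) : exists i'', forall g', nbM dY g i'' g' ->
  nbM dY g i g' /\ nbM dY g i' g'.
Proof.
case: i i' => [A r] [A' r']; exists (A ++ A', posmin r r') => g' H.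
split=> x Hx /=.
  apply: lt_le_trans (posmin_l r r'); apply: H; apply: in_or_app; tauto.
apply: lt_le_trans (posmin_r r r'); apply: H; apply: in_or_app; tauto.
Qed.

Lemma M_mul : forall g k, dcaut dY g -> dcaut dY k -> forall j, exists i1 i2,
    forall g' k', dcaut dY g' -> dcaut dY k' -> nbM dY g i1 g' -> nbM dY k i2 k' ->
      nbM dY (gmul g k) j (gmul g' k').
Proof.
move=> g k Ag Ak [A r].
have qg := dcaut_q Ag.
set rq := pos2q r.
set del := Defs.finv g.2 rq.
have Edel : g.2 del = rq by rewrite /del finvK //; case: qg.
have delpos : 0 < val del.
  have := qaut_pos (qaut_finv qg) (valP r : 0 < val rq); done.
have [A1 [r1 H1]] := M_pi_list [:: del] Ag.
exists (List.map k.1 A ++ A1, posmin r r1), (A, mkpos delpos).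
move=> g' k' Ag' Ak' Hg Hk x Hx /=.
have [_ [_ D']] := Ag'.
have Eg' : g'.2 del = rq.
  rewrite -Edel; apply: H1 => //; first by move=> y Hy; apply: lt_le_trans (posmin_r r r1);
    apply: Hg; apply: in_or_app; right.
  by left.
apply: (@ud_lt _ _ ud _ (g'.1 (k.1 x))).
  rewrite /=.
  rewrite D'.
  have: val (dY (k'.1 x) (k.1 x)) < val del by apply: Hk.
  rewrite (qaut_lt (dcaut_q Ag')) Eg' //.
apply: lt_le_trans (posmin_l r r1); apply: Hg; apply: in_or_app; left; exact: in_map.
Qed.

Lemma M_inv : forall g, dcaut dY g -> forall j, exists i, forall g', dcaut dY g' ->
    nbM dY g i g' -> nbM dY (ginv g) j (ginv g').
Proof.
move=> g Ag [A r].
have qg := dcaut_q Ag.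
set rq := pos2q r.
have gpos : 0 < val (g.2 rq) by apply: qaut_pos => //; exact: (valP r).
have [A1 [r1 H1]] := M_pi_list [:: rq] Ag.
exists (List.map (Defs.finv g.1) A ++ A1, posmin (mkpos gpos) r1).
move=> g' Ag' Hg x Hx /=.
have Eg' : g'.2 rq = g.2 rq.
  apply: H1 => //; last by left.
  move=> y Hy; apply: lt_le_trans (posmin_r _ r1); apply: Hg; apply: in_or_app; right; done.
set y := Defs.finv g.1 x.
have Ex : g.1 y = x by rewrite /y finvK //; exact: dcaut_bij1 Ag.
have Hy : val (dY (g'.1 y) (g.1 y)) < val (g.2 rq).
  have Hy0 := Hg y (in_or_app _ _ _ (or_introl (in_map (Defs.finv g.1) A x Hx))).
  exact: (lt_le_trans Hy0 (posmin_l (mkpos gpos) r1)).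
have [_ [_ Di]] := dcaut_inv Ag'.
have Ey : Defs.finv g'.1 (g'.1 y) = y by rewrite finvE //; exact: dcaut_bij1 Ag'.
rewrite -{1}Ey.
have -> : Defs.finv g'.1 x = Defs.finv g'.1 (g.1 y) by rewrite Ex.
have := Di (g.1 y) (g'.1 y); rewrite /= => ->.
have q' := qaut_finv (dcaut_q Ag').
rewrite ud_sym // in Hy.
have : val (dY (g.1 y) (g'.1 y)) < val (g'.2 rq) by rewrite Eg'.
by rewrite (qaut_lt q') finvE //; case: (dcaut_q Ag').
Qed.

End Metric.

Definition minnat (P : nat -> Prop) : nat :=
  epsilon (inhabits 0%N) (fun n => P n /\ forall m, P m -> (n <= m)%N).

Lemma minnat_ex (P : nat -> Prop) n : P n -> exists k, P k /\ forall m, P m -> (k <= m)%N.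
Proof.
elim: n {-2}n (leqnn n) => [|N IH] n Hn Pn.
  exists n; split=> // m _; lia.
case: (classic (exists m, (m < n)%N /\ P m)) => [[m [Hm Pm]]|H].
  apply: (IH m) => //; lia.
exists n; split=> // m Pm; case: (leqP n m) => // Hlt; exfalso; apply: H; by exists m.
Qed.

Lemma minnat_spec (P : nat -> Prop) : (exists n, P n) ->
  P (minnat P) /\ forall m, P m -> (minnat P <= m)%N.
Proof.
move=> [n Pn]; rewrite /minnat.
apply: (epsilon_spec (inhabits 0%N) (fun n => P n /\ forall m, P m -> (n <= m)%N)).
exact: minnat_ex Pn.
Qed.

Lemma pred_ext (P Q : nat -> Prop) : (forall n, P n <-> Q n) -> P = Q.
Proof. move=> H; apply: functional_extensionality => n; apply: propositional_extensionality; exact: H. Qed.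

Fixpoint cnt (P : nat -> Prop) (n : nat) : nat :=
  match n with
  | 0 => 0
  | n'.+1 => (cnt P n' + (if excluded_middle_informative (P n') then 1 else 0))%N
  end.

Lemma cnt_S P n : P n -> cnt P n.+1 = (cnt P n).+1.
Proof. move=> Pn /=; destruct (excluded_middle_informative (P n)) as [H0|H]; [by rewrite addn1|done]. Qed.

Lemma cnt_Sn P n : ~ P n -> cnt P n.+1 = cnt P n.
Proof. move=> Pn /=; destruct (excluded_middle_informative (P n)) as [H|H0]; [done|by rewrite addn0]. Qed.

Lemma cnt_mono P a b : (a <= b)%N -> (cnt P a <= cnt P b)%N.
Proof.
elim: b => [|b IH] Hab; first by have -> : a = 0%N by lia.
case: (leqP a b) => Hab'.
  apply: leq_trans (IH Hab') _ => /=; lia.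
by have -> : a = b.+1 by lia.
Qed.

Lemma cnt_lt P a b : P a -> (a < b)%N -> (cnt P a < cnt P b)%N.
Proof.
move=> Pa Hab; apply: leq_trans (cnt_mono P Hab); by rewrite cnt_S.
Qed.

Lemma cnt_zero P n : (forall m, (m < n)%N -> ~ P m) -> cnt P n = 0%N.
Proof.
elim: n => [|n IH] H //; rewrite cnt_Sn; last by apply: H.
apply: IH => m Hm; apply: H; lia.
Qed.

Lemma cnt_pos P n : cnt P n <> 0%N -> exists m, (m < n)%N /\ P m.
Proof.
move=> H; apply: NNPP => H2; apply: H; apply: cnt_zero => m Hm Pm; apply: H2; by exists m.
Qed.

Lemma cnt_range P a b : (a <= b)%N -> (forall j, (a <= j)%N -> (j < b)%N -> ~ P j) ->
  cnt P b = cnt P a.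
Proof.
elim: b => [|b IH] Hab H; first by have -> : a = 0%N by lia.
case: (leqP a b) => Hab'.
  rewrite cnt_Sn; last by apply: H.
  by apply: IH => // j H1 H2; apply: H => //; lia.
by have -> : a = b.+1 by lia.
Qed.

Lemma cnt_ext P Q n : (forall m, P m <-> Q m) -> cnt P n = cnt Q n.
Proof. by move=> /pred_ext ->. Qed.

Lemma rank_surj (S : nat -> Prop) : (forall N, exists m, (N <= m)%N /\ S m) ->
  forall k, exists m, S m /\ cnt S m = k.
Proof.
move=> inf; elim=> [|k [m [Sm Em]]].
  have [n [_ Sn]] := inf 0%N.
  have [H1 H2] := minnat_spec (ex_intro _ n Sn).
  exists (minnat S); split=> //; apply: cnt_zero => j Hj Sj.
  have := H2 _ Sj; lia.
set Q := fun n => S n /\ (m < n)%N.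
have [n [Hn Sn]] := inf m.+1.
have [[H1 H1'] H2] := minnat_spec (ex_intro Q n (conj Sn Hn)).
exists (minnat Q); split=> //.
rewrite (@cnt_range S m.+1) //; first by rewrite cnt_S // Em.
move=> j Hj Hj' Sj; have := H2 j (conj Sj Hj); by rewrite leqNgt Hj'.
Qed.

Fixpoint upto (k : nat) : list nat := match k with 0 => nil | k'.+1 => k' :: upto k' end.

Lemma in_upto m k : (m < k)%N -> In m (upto k).
Proof. elim: k => [|k IH] H /=; first lia. case: (ltngtP m k) => H'; [right; exact: IH | lia | by left]. Qed.

Lemma filter_length_lt A (f : A -> bool) (L : list A) a : In a L -> f a = false ->
  (length (List.filter f L) < length L)%N.
Proof.
elim: L => [|b L IH] //= [<-|Ha] Hf.
  rewrite Hf; have := List.filter_length_le f L; lia.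
case: (f b) => /=; have := IH Ha Hf; try lia.
Qed.

Lemma list_max (L : list qnn) (P : qnn -> Prop) : (exists q, In q L /\ P q) ->
  exists q1, In q1 L /\ P q1 /\ forall q, In q L -> P q -> val q <= val q1.
Proof.
elim: L => [|a L IH] [q [Hq Pq]] //.
case: (classic (exists q, In q L /\ P q)) => [Hex|Hnex].
  have [q1 [H1 [H2 H3]]] := IH Hex.
  case: (classic (P a /\ val q1 <= val a)) => [[Pa Ha]|Hna].
    exists a; split; first by left.
    split=> // q' /= [<-|Hq'] Pq'; first by [].
    exact: le_trans (H3 _ Hq' Pq') Ha.
  exists q1; split; first by right.
  split=> // q' /= [<-|Hq'] Pq'; last exact: H3.
  case: (leP (val a) (val q1)) => // Hlt; exfalso; apply: Hna; split=> //; exact: ltW.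
case: Hq => [Ea|Hq]; last by exfalso; apply: Hnex; exists q.
subst q; exists a; split; first by left.
split=> // q' /= [<-|Hq'] Pq' //; exfalso; apply: Hnex; by exists q'.
Qed.

Section Label.
Variables (X : Type) (d : X -> X -> qnn) (ud : ultrametric d) (c : X -> nat)
  (cinj : injective c) (ext : ext_property d) (x0 : X).

Definition ob (y : X) (q : qnn) : nat :=
  minnat (fun n => exists z, val (d y z) < val q /\ c z = n).

Lemma ob_spec y q : 0 < val q ->
  (exists z, val (d y z) < val q /\ c z = ob y q) /\
  forall z, val (d y z) < val q -> (ob y q <= c z)%N.
Proof.
move=> qpos.
have [H1 H2] := minnat_spec (ex_intro (fun n => exists z, val (d y z) < val q /\ c z = n)
   (c y) (ex_intro _ y (conj (eq_ind_r (fun v => v < val q) qpos (ud0 ud y)) erefl))).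
split; first exact: H1.
move=> z Hz; apply: H2; by exists z.
Qed.

Definition Sset (y : X) (q : qnn) : nat -> Prop :=
  fun n => exists z, val (d y z) <= val q /\ ob z q = n.

Definition label (y : X) (q : qnn) : nat := cnt (Sset y q) (ob y q).

Definition phi (y : X) (q : qnn) : nat := if 0 < val q then label y q else 0%N.

Lemma ob_eq y z q : val (d y z) < val q -> ob y q = ob z q.
Proof.
move=> H; rewrite /ob; congr minnat; apply: pred_ext => n; split=> [[w [Hw E]]|[w [Hw E]]];
  exists w; split=> //.
  have H' : val (d z y) < val q by rewrite ud_sym. exact: (ud_lt ud H' Hw).
exact: (ud_lt ud H Hw).
Qed.

Lemma S_eq y z q : val (d y z) <= val q -> Sset y q = Sset z q.
Proof.
move=> H; apply: pred_ext => n; split=> [[w [Hw E]]|[w [Hw E]]]; exists w; split=> //.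
  have H' : val (d z y) <= val q by rewrite ud_sym. exact: (ud_le ud H' Hw).
exact: (ud_le ud H Hw).
Qed.

Lemma phi_I1 x y q : val (d x y) < val q -> phi x q = phi y q.
Proof.
move=> H; rewrite /phi.
have -> : 0 < val q by apply: le_lt_trans H; exact: qge0.
by rewrite /label (ob_eq H) (S_eq (ltW H)).
Qed.

Lemma ob_in y q : Sset y q (ob y q).
Proof. exists y; split=> //; rewrite ud0 //; exact: qge0. Qed.

Lemma ob_neq y z q : 0 < val q -> val (d y z) = val q -> ob y q <> ob z q.
Proof.
move=> qpos Hd E.
have [[w [Hw Ew]] _] := ob_spec y qpos.
have [[w' [Hw' Ew']] _] := ob_spec z qpos.
have Eww : w = w' by apply: cinj; rewrite Ew Ew' E.
subst w'.
have : val (d y z) < val q by apply: (ud_lt ud Hw); rewrite ud_sym.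
by rewrite Hd ltxx.
Qed.

Lemma phi_I2 x y : x <> y -> phi x (d x y) <> phi y (d x y).
Proof.
move=> nxy.
have qpos := ud_pos ud nxy.
rewrite /phi qpos /label.
rewrite -(S_eq (lexx (val (d x y)))).
have Hne := ob_neq qpos erefl.
have Sx := ob_in x (d x y).
have Sy : Sset x (d x y) (ob y (d x y)) by rewrite (S_eq (lexx (val (d x y)))); exact: ob_in.
case: (ltngtP (ob x (d x y)) (ob y (d x y))) => H.
- have := cnt_lt Sx H; lia.
- have := cnt_lt Sy H; lia.
- by [].
Qed.

Lemma phi_inj x y : (forall q, phi x q = phi y q) -> x = y.
Proof. move=> H; apply: NNPP => nxy; exact: (phi_I2 nxy (H _)). Qed.

Definition pt (n : nat) : X := epsilon (inhabits x0) (fun z => c z = n).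

Lemma pt_c z : pt (c z) = z.
Proof.
apply: cinj; rewrite /pt.
apply: (epsilon_spec (inhabits x0) (fun w => c w = c z)); by exists z.
Qed.

Definition Lx (x : X) : list qnn := List.map (fun n => d x (pt n)) (upto (c x)).

Lemma phi_supp x q : phi x q <> 0%N -> In q (Lx x).
Proof.
rewrite /phi; case: ifP => // qpos /cnt_pos [m [Hm [w [Hw Ew]]]].
have [[z [Hz Ez]] _] := ob_spec w qpos.
have [_ Hx] := ob_spec x qpos.
have Hxz : val (d x z) <= val q by exact: (ud_le ud Hw (ltW Hz)).
have Eq : val (d x z) = val q.
  apply/eqP; rewrite eq_le Hxz /= leNgt; apply/negP => H.
  have := Hx z H; rewrite Ez Ew; lia.
have Hcx : (c z < c x)%N.
  have := Hx x; rewrite ud0 // qpos => /(_ isT); rewrite Ez Ew; lia.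
rewrite /Lx; have -> : q = d x (pt (c z)) by apply: qval_inj; rewrite pt_c Eq.
apply: (in_map (fun n => d x (pt n))); exact: in_upto.
Qed.

Lemma phi0 x q : ~~ (0 < val q) -> phi x q = 0%N.
Proof. by rewrite /phi => /negbTE ->. Qed.

Lemma label_min y q : 0 < val q -> (forall u, val (d y u) <= val q -> (c y <= c u)%N) ->
  label y q = 0%N.
Proof.
move=> qpos Hmin.
have [[w [Hw Ew]] Hob] := ob_spec y qpos.
have Eob : ob y q = c y.
  apply/eqP; rewrite eqn_leq; apply/andP; split.
    apply: Hob; rewrite ud0 //.
  rewrite -Ew; apply: Hmin; exact: ltW.
rewrite /label Eob; apply: cnt_zero => m Hm [u [Hu Eu]].
have [[z [Hz Ez]] _] := ob_spec u qpos.
have : (c y <= c z)%N by apply: Hmin; exact: (ud_le ud Hu (ltW Hz)).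
rewrite Ez Eu; lia.
Qed.

Lemma S_inf y q : 0 < val q -> forall N, exists m, (N <= m)%N /\ Sset y q m.
Proof.
move=> qpos N.
set A := y :: List.filter (fun z => val (d y z) <= val q) (List.map pt (upto N)).
have HA : forall a, In a A -> val (d y a) <= val q.
  move=> a /= [<-|]; first by rewrite ud0 // ltW.
  by move/filter_In => [_ ->].
have [w Hw] : exists z, forall a, In a A -> val (d z a) = val q.
  apply (@ext A (fun _ => val q)); [by move=> a _ | move=> a b Ha Hb]; split; last by rewrite le_max lexx orbT.
  rewrite le_max; apply/orP; left; apply: (ud_le ud _ (HA b Hb)); rewrite (ud_sym ud); exact: (HA a Ha).
have Hwy : val (d w y) = val q by apply: Hw; left.
exists (ob w q); split; last first.
  exists w; split; last by [].
  by rewrite ud_sym // Hwy.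
rewrite leqNgt; apply/negP => Hlt.
have [[z [Hz Ez]] _] := ob_spec w qpos.
have Hzin : In z A.
  right; apply/filter_In; split.
    rewrite -(pt_c z); apply: in_map; apply: in_upto; by rewrite Ez.
  apply: (ud_le ud _ (ltW Hz)); by rewrite ud_sym // Hwy.
by have := Hw z Hzin; move=> E; rewrite E ltxx in Hz.
Qed.

Lemma choose_sub y q k : 0 < val q -> exists z, val (d y z) <= val q /\ label z q = k /\
  (forall u, val (d z u) < val q -> (c z <= c u)%N).
Proof.
move=> qpos.
have [m [[w [Hw Ew]] Em]] := rank_surj (S_inf y qpos) k.
have [[z [Hz Ez]] _] := ob_spec w qpos.
have Eob : ob z q = c z by rewrite -(ob_eq Hz) Ew Ez.
have Hyz : val (d y z) <= val q by exact: (ud_le ud Hw (ltW Hz)).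
exists z; split=> //; split.
  by rewrite /label Eob -(S_eq Hyz) Ez Ew Em.
move=> u Hu; rewrite -Eob; have [_ H] := ob_spec z qpos; exact: H.
Qed.

Lemma surj_aux n : forall (L : list qnn), (length L <= n)%N -> forall (p : qnn) y (f : qnn -> nat),
  0 < val p -> (forall z, val (d y z) < val p -> (c y <= c z)%N) ->
  (forall q, val p <= val q -> phi y q = f q) ->
  (forall q, val q < val p -> f q <> 0%N -> In q L) ->
  (forall q, ~~ (0 < val q) -> f q = 0%N) -> exists x, forall q, phi x q = f q.
Proof.
elim: n => [|n IH] L HL p y f ppos ymin Hge HL' H0.
all: case: (classic (exists q, In q L /\ (0 < val q /\ val q < val p /\ f q <> 0%N))) =>
  [Hex|Hnex].
2,4: exists y => q; case: (leP (val p) (val q)) => Hpq; first exact: Hge.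
2,3: case: (boolP (0 < val q)) => qpos; last by rewrite phi0 // H0.
2,3: case: (f q =P 0%N) => Hfq; last first.
2,4: by exfalso; apply: Hnex; exists q; split; [exact: HL' | split].
2,3: rewrite Hfq /phi qpos; apply: label_min => // u Hu; apply: ymin; exact: le_lt_trans Hu Hpq.
  have [q [Hq _]] := Hex. destruct L as [|a L]; first done. by [].
have [q1 [Hq1L [[q1pos [q1p fq1]] Hmax]]] := list_max Hex.
have [z [Hyz [Lz zmin]]] := choose_sub y (f q1) q1pos.
set L' := List.filter (fun q => val q < val q1) L.
have HL1 : (length L' <= n)%N.
  rewrite /L'; have := @filter_length_lt _ (fun q => val q < val q1) L q1 Hq1L (ltxx (val q1)) => Hlt; rewrite -ltnS; exact: (leq_trans Hlt HL).
apply: (IH L' HL1 q1 z f q1pos zmin) => //.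
- move=> q Hq; case: (eqVneq (val q) (val q1)) => Eq.
    have -> : q = q1 by apply: qval_inj.
    by rewrite /phi q1pos Lz.
  have Hlt : val q1 < val q by rewrite lt_def Eq Hq.
  have Hzy : val (d z y) < val q by apply: le_lt_trans Hlt; rewrite ud_sym.
  rewrite (phi_I1 Hzy).
  case: (leP (val p) (val q)) => Hpq; first exact: Hge.
  have qpos : 0 < val q by exact: lt_trans Hlt.
  rewrite /phi qpos label_min //; last first.
    move=> u Hu; apply: ymin; exact: le_lt_trans Hu Hpq.
  case: (f q =P 0%N) => // Hfq; exfalso.
  have := Hmax q (HL' q Hpq Hfq) (conj qpos (conj Hpq Hfq)).
  by rewrite leNgt Hlt.
- move=> q Hq Hfq; apply/filter_In; split=> //.
  apply: HL' => //; exact: lt_trans Hq q1p.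
Qed.

Definition xmin : X := pt (minnat (fun n => exists z, c z = n)).

Lemma xmin_min z : (c xmin <= c z)%N.
Proof.
have [[w Hw] H] := minnat_spec (ex_intro (fun n => exists z, c z = n) (c x0) (ex_intro _ x0 erefl)).
rewrite /xmin -Hw pt_c Hw; apply: H; by exists z.
Qed.

Fixpoint sumq (L : list qnn) : rat := match L with nil => 1 | q :: L' => val q + sumq L' end.

Lemma sumq_pos L : 0 < sumq L.
Proof. elim: L => [|q L IH] /=; [exact: ltr01 | exact: ltr_wpDl (qge0 q) IH]. Qed.

Lemma sumq_gt L q : In q L -> val q < sumq L.
Proof.
elim: L => [|a L IH] //= [<-|Hq].
  by rewrite ltrDl sumq_pos.
apply: lt_le_trans (IH Hq) _; rewrite lerDr; exact: qge0.
Qed.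

Lemma phi_surj (f : qnn -> nat) : (forall q, ~~ (0 < val q) -> f q = 0%N) ->
  (exists L, forall q, f q <> 0%N -> In q L) -> exists x, forall q, phi x q = f q.
Proof.
move=> H0 [L HL].
pose p : qnn := exist _ (sumq L) (ltW (sumq_pos L)).
apply: (@surj_aux (length L) L (leqnn _) p xmin f (sumq_pos L)).
- move=> z _; exact: xmin_min.
- move=> q Hq.
  case: (boolP (0 < val q)) => qpos; last by rewrite phi0 // H0.
  rewrite /phi qpos label_min //; last by move=> u _; exact: xmin_min.
  case: (f q =P 0%N) => // Hfq; exfalso.
  have := sumq_gt (HL q Hfq); by rewrite ltNge Hq.
- move=> q _ Hfq; exact: HL.
- exact: H0.
Qed.


Definition sX (h : qnn -> qnn) : dcmap X :=
  (fun x => epsilon (inhabits x) (fun x' => forall q, phi x' q = phi x (Defs.finv h q)), h).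

Lemma sX_spec h x : qaut h -> forall q, phi ((sX h).1 x) q = phi x (Defs.finv h q).
Proof.
move=> qh; rewrite /sX /=.
apply: (epsilon_spec (inhabits x) (fun x' => forall q, phi x' q = phi x (Defs.finv h q))).
apply: phi_surj.
  move=> q Hq; apply: phi0; rewrite qaut_0' //; first exact: qaut_finv.
  by apply/eqP; rewrite eq_le qge0 andbT leNgt.
exists (List.map h (Lx x)) => q /phi_supp Hin.
have := in_map h _ _ Hin; rewrite finvK //; exact: qaut_bij.
Qed.

Lemma sX_dist h x y : qaut h -> d ((sX h).1 x) ((sX h).1 y) = h (d x y).
Proof.
move=> qh.
have qi := qaut_finv qh.
case: (classic (x = y)) => [<-|nxy].
  apply: qval_inj; rewrite ud0 // qaut_0' //; exact: ud0.
set x' := (sX h).1 x; set y' := (sX h).1 y.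
have Ed : Defs.finv h (h (d x y)) = d x y by rewrite finvE //; exact: qaut_bij.
have nxy' : x' <> y'.
  move=> E; apply: (phi_I2 nxy).
  by rewrite -{1}Ed -sX_spec // -/x' E /y' sX_spec // Ed.
apply: qval_inj; apply/eqP; rewrite eq_le; apply/andP; split.
  rewrite leNgt; apply/negP => Hlt.
  apply: (phi_I2 nxy').
  rewrite !sX_spec //.
  apply: phi_I1.
  by rewrite -Ed -(qaut_lt qi).
rewrite leNgt; apply/negP => Hlt.
have := sX_spec x qh (h (d x y)); rewrite -/x' (phi_I1 Hlt) /y' sX_spec // Ed.
by move=> E; apply: (phi_I2 nxy); rewrite E.
Qed.

Lemma sX_inv h x : qaut h -> (sX (Defs.finv h)).1 ((sX h).1 x) = x.
Proof.
move=> qh; have qi := qaut_finv qh.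
apply: phi_inj => q; rewrite sX_spec // sX_spec // finvK //; exact: qaut_bij.
Qed.

Lemma sX_inv' h x : qaut h -> (sX h).1 ((sX (Defs.finv h)).1 x) = x.
Proof.
move=> qh; have qi := qaut_finv qh.
apply: phi_inj => q; rewrite sX_spec // sX_spec // finvE //; exact: qaut_bij.
Qed.

Lemma sX_aut h : qaut h -> dcaut d (sX h).
Proof.
move=> qh; split; last by split=> // x y; exact: sX_dist.
exists (sX (Defs.finv h)).1 => x; [exact: sX_inv | exact: sX_inv'].
Qed.

Lemma sX_hom h k : qaut h -> qaut k -> sX (h \o k) = gmul (sX h) (sX k).
Proof.
move=> qh qk; rewrite /gmul /=; congr pair.
apply: functional_extensionality => x /=.
apply: phi_inj => q; rewrite sX_spec; last exact: qaut_comp.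
rewrite sX_spec // sX_spec // finv_comp //; exact: qaut_bij.
Qed.

Lemma sX_pi h : qaut h -> (sX h).2 = h.
Proof. by []. Qed.

Lemma sX_cont : continuous_map qaut nbQ (@nbPW X) sX.
Proof.
move=> h qh [F B].
exists (B ++ List.concat (List.map Lx F)) => h' qh' Hh'.
have [HB HC] := nbQ_app Hh'.
split=> /= [x Hx|q Hq]; last exact: HB.
have HL : forall u, In u (Lx x) -> h' u = h u.
  move=> u Hu; apply: HC; apply/in_concat; exists (Lx x); split=> //; exact: in_map.
apply: phi_inj => q; rewrite !sX_spec //.
have bh := qaut_bij qh; have bh' := qaut_bij qh'.
case: (phi x (Defs.finv h q) =P 0%N) => E1; last first.
  have Hu := phi_supp (E1).
  have E : h' (Defs.finv h q) = q by rewrite HL // finvK.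
  by rewrite -{1}E finvE.
case: (phi x (Defs.finv h' q) =P 0%N) => E2; last first.
  have Hu := phi_supp (E2).
  have E : h (Defs.finv h' q) = q by rewrite -HL // finvK.
  by rewrite -{2}E finvE.
by rewrite E1 E2.
Qed.

End Label.

Lemma small_inv (eps : rat) : 0 < eps -> exists N, forall n, (N <= n)%N -> (n.+1%:R)^-1 < eps.
Proof.
move=> epos; exists (Num.Def.archi_bound (eps^-1)) => n Hn.
have H1 := @archi_boundP _ (eps^-1) (ltW (eq_ind_r is_true epos (invr_gt0 eps))).
rewrite -[eps]invrK ltf_pV2 ?posrE ?invr_gt0 ?ltr0Sn //.
apply: lt_le_trans H1 _; rewrite ler_nat; exact: leq_trans Hn (leqnSn n).
Qed.

Lemma inv_pos (n : nat) : 0 < (n.+1%:R : rat)^-1.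
Proof. by rewrite invr_gt0 ltr0Sn. Qed.

Lemma rat_zero (v : rat) : 0 <= v -> (forall eps, 0 < eps -> v < eps) -> v = 0.
Proof.
move=> v0 H; apply/eqP; rewrite eq_le v0 andbT leNgt; apply/negP => vpos.
by have := H v vpos; rewrite ltxx.
Qed.

Section Compl.
Variables (X : Type) (d : X -> X -> qnn) (Y : Type) (dY : Y -> Y -> qnn) (e : X -> Y)
 (ud : ultrametric d) (udY : ultrametric dY)
 (eiso : forall x x', dY (e x) (e x') = d x x')
 (dense : forall y (r : rat), 0 < r -> exists x, val (dY (e x) y) < r)
 (complete : forall u : nat -> Y, cauchy dY u -> exists y, converges_to dY u y)
 (sXf : (qnn -> qnn) -> dcmap X)
 (sXf_aut : forall h, qaut h -> dcaut d (sXf h))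
 (sXf_pi : forall h, qaut h -> (sXf h).2 = h)
 (sXf_hom : forall h k, qaut h -> qaut k -> sXf (h \o k) = gmul (sXf h) (sXf k))
 (sXf_inv : forall h x, qaut h -> (sXf (Defs.finv h)).1 ((sXf h).1 x) = x)
 (sXf_inv' : forall h x, qaut h -> (sXf h).1 ((sXf (Defs.finv h)).1 x) = x)
 (sXf_cont : continuous_map qaut nbQ (@nbPW X) sXf).

Lemma sXf_dist h a b : qaut h -> d ((sXf h).1 a) ((sXf h).1 b) = h (d a b).
Proof. move=> qh; have [_ [_ H]] := sXf_aut qh; by rewrite H sXf_pi. Qed.

Lemma Y_uniq (g : X -> X) z z' : (forall x, exists x', g x' = x) ->
  (forall x, dY z (e (g x)) = dY z' (e (g x))) -> z = z'.
Proof.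
move=> gs H; apply: NNPP => nzz.
have rpos := ud_pos udY nzz.
have [x Hx] := @dense z' _ rpos.
have [x' Ex] := gs x.
have Hx' : val (dY (e x) z) < val (dY z z').
  by rewrite (ud_sym udY) -Ex H Ex (ud_sym udY).
have := ud_lt udY (eq_ind_r (fun v => val v < _) Hx' (ud_sym udY z (e x))) Hx.
by rewrite ltxx.
Qed.

Definition Pz (h : qnn -> qnn) (y : Y) (z : Y) : Prop :=
  forall x, dY z (e ((sXf h).1 x)) = h (dY y (e x)).

Lemma Y_exist h y : qaut h -> exists z, Pz h y z.
Proof.
move=> qh.
have [x1 _] := @dense y 1 ltr01.
pose xs (n : nat) := epsilon (inhabits x1) (fun x => val (dY (e x) y) < (n.+1%:R)^-1).
have Hxs n : val (dY (e (xs n)) y) < (n.+1%:R)^-1.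
  rewrite /xs; apply: (epsilon_spec (inhabits x1) (fun x => val (dY (e x) y) < (n.+1%:R)^-1)).
  exact: dense (inv_pos n).
set f := (sXf h).1.
pose u n := e (f (xs n)).
have small : forall (eps : qnn), 0 < val eps -> exists N, forall n, (N <= n)%N ->
    val (dY (e (xs n)) y) < val (Defs.finv h eps).
  move=> eps epos.
  have dpos : 0 < val (Defs.finv h eps) by apply: qaut_pos => //; exact: qaut_finv.
  have [N HN] := small_inv dpos.
  exists N => n Hn; exact: lt_trans (Hxs n) (HN n Hn).
have hlt : forall (a : qnn) eps, val a < val (Defs.finv h eps) -> val (h a) < val eps.
  move=> a eps; rewrite (qaut_lt qh) finvK //; exact: qaut_bij.
have Cu : cauchy dY u.
  move=> eps epos.
  pose epq : qnn := exist _ eps (ltW epos).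
  have [N HN] := small epq epos.
  exists N => m n Hm Hn.
  rewrite /u eiso sXf_dist //.
  apply: (hlt _ epq); rewrite -eiso.
  apply: (ud_lt udY (HN m Hm)); rewrite (ud_sym udY); exact: HN.
have [z Hz] := complete Cu.
exists z => x.
case: (classic (y = e x)) => [Eyx|nyx].
  have H0 : val (h (dY y y)) = 0 by apply: qaut_0' => //; exact: ud0.
  apply: qval_inj; rewrite -Eyx H0.
  apply: rat_zero; first exact: qge0.
  move=> eps epos.
  pose epq : qnn := exist _ eps (ltW epos).
  have [N1 H1] := small epq epos.
  have [N2 H2] := Hz eps epos.
  set n := maxn N1 N2.
  have Hn1 : (N1 <= n)%N by rewrite leq_maxl.
  have Hn2 : (N2 <= n)%N by rewrite leq_maxr.
  apply: (ud_lt udY (y := u n)); first by rewrite (ud_sym udY); exact: H2.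
  rewrite /u eiso sXf_dist //; apply: (hlt _ epq); rewrite -eiso -Eyx; exact: H1.
have rpos := ud_pos udY nyx.
have hpos : 0 < val (h (dY y (e x))) by exact: qaut_pos.
have [N2 H2] := Hz _ hpos.
pose rq := h (dY y (e x)).
have [N1 H1] := small rq hpos.
set n := maxn N1 N2.
have Hn1 : (N1 <= n)%N by rewrite leq_maxl.
have Hn2 : (N2 <= n)%N by rewrite leq_maxr.
have E1 : dY (e (xs n)) (e x) = dY y (e x).
  apply: (ud_iso udY).
  have := H1 n Hn1; rewrite /rq finvE //; exact: qaut_bij.
have E2 : dY (u n) (e (f x)) = h (dY y (e x)) by rewrite /u eiso sXf_dist // -eiso E1.
rewrite -E2; apply: (ud_iso udY); rewrite E2 (ud_sym udY); exact: H2.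
Qed.

Definition sY (h : qnn -> qnn) : dcmap Y :=
  (fun y => epsilon (inhabits y) (Pz h y), h).

Lemma sY_spec h y : qaut h -> Pz h y ((sY h).1 y).
Proof. move=> qh; apply: (epsilon_spec (inhabits y) (Pz h y)); exact: Y_exist. Qed.

Lemma sXf_surj h : qaut h -> forall x, exists x', (sXf h).1 x' = x.
Proof. move=> qh x; exists ((sXf (Defs.finv h)).1 x); exact: sXf_inv'. Qed.

Lemma sY_dist h y y' : qaut h -> dY ((sY h).1 y) ((sY h).1 y') = h (dY y y').
Proof.
move=> qh.
case: (classic (y = y')) => [<-|nyy].
  by apply: qval_inj; rewrite ud0 // qaut_0' // ud0.
have rpos := ud_pos udY nyy.
have [x Hx] := @dense y' _ rpos.
have E1' : dY (e x) y = dY y' y by apply: (ud_iso udY); rewrite (ud_sym udY y').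
have E1 : dY y (e x) = dY y y' by rewrite (ud_sym udY y) E1' (ud_sym udY y').
have Ha := sY_spec y qh x.
have Hb := sY_spec y' qh x.
rewrite E1 in Ha.
set a := (sY h).1 y; set b := (sY h).1 y'; set w := e ((sXf h).1 x).
have Hlt : val (dY b w) < val (dY w a).
  rewrite Hb (ud_sym udY w) Ha -(qaut_lt qh) (ud_sym udY y'); exact: Hx.
rewrite (ud_sym udY a) (ud_iso udY Hlt) (ud_sym udY w) Ha.
by [].
Qed.


Lemma sY_inv h y : qaut h -> (sY (Defs.finv h)).1 ((sY h).1 y) = y.
Proof.
move=> qh; have qi := qaut_finv qh.
apply: (@Y_uniq ((sXf (Defs.finv h)).1 \o (sXf h).1)).
  move=> x; exists x => /=; exact: sXf_inv.
move=> x /=.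
rewrite (sY_spec _ qi) (sY_spec _ qh) sXf_inv // finvE //; exact: qaut_bij.
Qed.

Lemma sY_inv' h y : qaut h -> (sY h).1 ((sY (Defs.finv h)).1 y) = y.
Proof.
move=> qh; have qi := qaut_finv qh.
apply: (@Y_uniq ((sXf h).1 \o (sXf (Defs.finv h)).1)).
  move=> x; exists x => /=; exact: sXf_inv'.
move=> x /=.
rewrite (sY_spec _ qh) (sY_spec _ qi) sXf_inv' // finvK //; exact: qaut_bij.
Qed.

Lemma sY_aut h : qaut h -> dcaut dY (sY h).
Proof.
move=> qh; split; last by split=> // x y; exact: sY_dist.
exists (sY (Defs.finv h)).1 => y; [exact: sY_inv | exact: sY_inv'].
Qed.

Lemma sY_pi h : qaut h -> (sY h).2 = h.
Proof. by []. Qed.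

Lemma sY_hom h k : qaut h -> qaut k -> sY (h \o k) = gmul (sY h) (sY k).
Proof.
move=> qh qk; have qhk := qaut_comp qh qk.
rewrite /gmul /=; congr pair.
apply: functional_extensionality => y /=.
apply: (@Y_uniq ((sXf (h \o k)).1)); first exact: sXf_surj.
move=> x.
rewrite (sY_spec _ qhk) sXf_hom // /= (sY_spec _ qh) (sY_spec _ qk) //.
Qed.

Lemma sY_cont : continuous_map qaut nbQ (nbM dY) sY.
Proof.
move=> h qh [A r].
set rq := pos2q r.
set del := Defs.finv h rq.
have qi := qaut_finv qh.
have Edel : h del = rq by rewrite /del finvK //; exact: qaut_bij.
have delpos : 0 < val del by apply: qaut_pos => //; exact: (valP r).
suff [C HC] : exists C, forall h', qaut h' -> nbQ h C h' -> forall y, In y A ->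
    val (dY ((sY h').1 y) ((sY h).1 y)) < val r.
  exists (del :: C) => h' qh' Hh' y Hy.
  apply: (HC h' qh') => // q Hq; apply: Hh'; by right.
elim: A => [|y A [C HC]]; first by exists [::].
have [x Hx] := @dense y _ delpos.
have [B0 HB0] := sXf_cont qh ([:: x], [::]).
exists (del :: B0 ++ C) => h' qh' Hh' y' /= [<-|Hy']; last first.
  apply: (HC h' qh') => // q Hq; apply: Hh'; right; apply: in_or_app; by right.
have [Hd HB] : h' del = h del /\ nbQ h B0 h'.
  split; first by apply: Hh'; left.
  move=> q Hq; apply: Hh'; right; apply: in_or_app; by left.
have [Hx1 _] := HB0 h' qh' HB.
have Ex : (sXf h').1 x = (sXf h).1 x by apply: Hx1; left.
have H1 := sY_spec y qh' x.
have H2 := sY_spec y qh x.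
rewrite Ex in H1.
have Hyx : val (dY y (e x)) < val del by rewrite (ud_sym udY); exact: Hx.
apply: (ud_lt udY (y := e ((sXf h).1 x))).
  rewrite H1 -[val r]/(val rq) -Edel -Hd -(qaut_lt qh'); exact: Hyx.
rewrite (ud_sym udY) H2 -[val r]/(val rq) -Edel -(qaut_lt qh); exact: Hyx.
Qed.

Lemma Y_full (fullX : forall q : qnn, 0 < val q -> exists a b, d a b = q) :
  forall q : qnn, 0 < val q -> exists a b, dY a b = q.
Proof.
move=> q qpos; have [a [b E]] := fullX q qpos; exists (e a), (e b); by rewrite eiso.
Qed.

End Compl.

Unset Implicit Arguments.
Theorem theorem4p4 (X : Type) (d : X -> X -> qnn) (Y : Type) (dY : Y -> Y -> qnn)
    (e : X -> Y) :
  rational_urysohn_ultrametric d ->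
  is_completion d dY e ->
  canonical_split (dcaut d) (dciso d) (@nbPW X) /\
  canonical_split (dcaut dY) (dciso dY) (nbM dY).
Proof.
move=> [ud [[c cinj] ext]] [udY [eiso [dense complete]]].
have [x0 _] : exists z : X, forall a, In a nil -> val (d z a) = 1.
  by apply: (@ext nil (fun _ => 1)).
have fullX : forall q : qnn, 0 < val q -> exists a b, d a b = q.
  move=> q qpos.
  have [z Hz] : exists z, forall a, In a [:: x0] -> val (d z a) = val q.
    apply: (@ext [:: x0] (fun _ => val q)) => [a _ //|a b /= [<-|//] [<-|//]].
    rewrite ud0 // !le_max lexx orbT (ltW qpos) //.
  exists z, x0; apply: qval_inj; apply: Hz; by left.
have sa := fun h (qh : qaut h) => sX_aut ud cinj ext x0 qh.
have sp : forall h, qaut h -> (sX d c h).2 = h by [].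
have sh := fun h k (qh : qaut h) (qk : qaut k) => sX_hom ud cinj ext x0 qh qk.
have sc := sX_cont ud cinj ext x0.
have si := fun h x (qh : qaut h) => sX_inv ud cinj ext x0 x qh.
have si' := fun h x (qh : qaut h) => sX_inv' ud cinj ext x0 x qh.
split.
  apply: (abstract_split sa sh sc sp).
  - move=> g k Ag Ak j; exact: PW_mul.
  - move=> g Ag j; exact: PW_inv.
  - exact: PW_pi.
  - move=> g i Ag; exact: (PW_refl i Ag).
  - move=> g i i'; exact: PW_cap.
have fullY := Y_full eiso fullX.
apply: (abstract_split (s := sY dY e (sX d c))).
- move=> h qh; exact: (sY_aut udY eiso dense complete sa sp si si' qh).
- move=> h k qh qk; exact: (sY_hom udY eiso dense complete sa sp sh si' qh qk).
- exact: (sY_cont udY eiso dense complete sa sp sc).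
- by [].
- move=> g k Ag Ak j; exact: (M_mul udY fullY Ag Ak).
- move=> g Ag j; exact: (M_inv udY fullY Ag).
- exact: (M_pi udY fullY).
- move=> g i Ag; exact: (M_refl udY).
- move=> g i i'; exact: M_cap.
Qed.
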